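(* Let $\mathcal I$ be an ideal on $\omega$ and let $X$ be a normal space. (1) $X\in(\mathcal I\text{-p},\mathcal I\text{-}\sigma\text{-u})$ if and only if $X\in(\mathcal I\text{-p},\mathcal I\text{-qn})$ and $X\in(\mathcal I\text{-qn},\mathcal I\text{-}\sigma\text{-u})$. (2) $\mathrm{non}(\mathcal I\text{-p},\mathcal I\text{-}\sigma\text{-u})=\min\{\mathrm{non}(\mathcal I\text{-p},\mathcal I\text{-qn}),\mathrm{non}(\mathcal I\text{-qn},\mathcal I\text{-}\sigma\text{-u})\}$.
   Context: An ideal on $\omega$ is a family $\mathcal I\subseteq\mathcal P(\omega)$ closed under finite unions and subsets, containing all finite sets, with $\omega\notin\mathcal I$. A real sequence $(a_n)$ is $\mathcal I$-convergent to $0$ if $\{n:|a_n|\ge\varepsilon\}\in\mathcal I$ for every $\varepsilon>0$. For a sequence $(f_n)$ of real-valued functions on a set $X$: $\mathcal I$-p ($\mathcal I$-pointwise convergence to $0$) means $(f_n(x))$ is $\mathcal I$-convergent to $0$ for each $x\in X$; $\mathcal I$-u ($\mathcal I$-uniform) means $\{n:\exists x\in X\,(|f_n(x)|\ge\varepsilon)\}\in\mathcal I$ for each $\varepsilon>0$; $\mathcal I$-$\sigma$-u ($\mathcal I$-$\sigma$-uniform) means $X=\bigcup_{k\in\omega}X_k$ for some sets $X_k$ with $(f_n\restriction X_k)$ $\mathcal I$-uniformly convergent to $0$ for each $k$; $\mathcal I$-qn ($\mathcal I$-quasi-normal) means there is a sequence $(\varepsilon_n)$ of positive reals $\mathcal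 I$-convergent to $0$ with $\{n:|f_n(x)|\ge\varepsilon_n\}\in\mathcal I$ for each $x\in X$. $\mathcal C(X)$ is the set of continuous real-valued functions on $X$. A normal space is a Hausdorff space in which disjoint closed sets have disjoint open neighbourhoods. For convergence notions $\alpha,\beta$, $(\alpha,\beta)$ is the class of normal spaces $X$ such that for every $(f_n)$ in $\mathcal C(X)$: $f_n\to0$ in sense $\alpha$ iff $f_n\to0$ in sense $\beta$; $\mathrm{non}(\alpha,\beta)$ is the least cardinality of a normal space not in $(\alpha,\beta)$ ($\infty$ if none; $\min$ is taken with the convention $\kappa<\infty$ for every cardinal $\kappa$). *)

(* Defs.v *)
From HB Require Import structures.
From mathcomp Require Import all_boot all_order all_algebra.
From mathcomp Require Import all_classical all_reals all_analysis.
Set Implicit Arguments. Unset Strict Implicit. Unset Printing Implicit Defensive.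
Import Order.TTheory GRing.Theory Num.Theory.
Import numFieldNormedType.Exports.
Local Open Scope classical_set_scope.
Local Open Scope ring_scope.

Definition is_ideal (I : set (set nat)) : Prop :=
  [/\ (forall A B, I A -> I B -> I (A `|` B)),
      (forall A B, B `<=` A -> I A -> I B),
      (forall A, finite_set A -> I A)
    & ~ I setT].

Definition Iconv0 (R : realType) (I : set (set nat)) (a : nat -> R) : Prop :=
  forall eps : R, 0 < eps -> I [set n | eps <= `|a n|].

Definition conv_notion (R : realType) :=
  forall X : topologicalType, (nat -> X -> R) -> Prop.

Definition Ip (R : realType) (I : set (set nat)) : conv_notion R :=
  fun X f => forall x : X, Iconv0 I (fun n => f n x).

Definition Iu_on (R : realType) (I : set (set nat)) (X : Type)
  (D : set X) (f : nat -> X -> R) : Prop :=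
  forall eps : R, 0 < eps -> I [set n | exists2 x, D x & eps <= `|f n x|].

Definition Isigmau (R : realType) (I : set (set nat)) : conv_notion R :=
  fun X f => exists Xk : nat -> set X,
    \bigcup_k Xk k = [set: X] /\ forall k, Iu_on I (Xk k) f.

Definition Iqn (R : realType) (I : set (set nat)) : conv_notion R :=
  fun X f => exists eps : nat -> R,
    [/\ (forall n, 0 < eps n), Iconv0 I eps &
        forall x : X, I [set n | eps n <= `|f n x|]].

Definition normal (X : topologicalType) : Prop :=
  hausdorff_space X /\
  forall A B : set X, closed A -> closed B -> A `&` B = set0 ->
    exists U V : set X, [/\ open U, open V, A `<=` U, B `<=` V & U `&` V = set0].

Definition in_class (R : realType) (alpha beta : conv_notion R)
  (X : topologicalType) : Prop :=
  normal X /\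
  forall f : nat -> X -> R, (forall n, continuous (f n)) ->
    (alpha X f <-> beta X f).

(* Cardinal invariant non(alpha,beta), described without a cardinal type:
   - non_infty: non(alpha,beta) = infinity (no normal space outside the class);
   - le_non T: |T| <= non(alpha,beta) (every normal space outside the class
     has cardinality at least |T|; vacuous when non = infinity);
   - non_is T: non(alpha,beta) = |T| (some normal space outside the class
     has cardinality |T|, and |T| <= non). *)
Definition non_infty (R : realType) (alpha beta : conv_notion R) : Prop :=
  forall X : topologicalType, normal X -> in_class alpha beta X.

Definition le_non (R : realType) (alpha beta : conv_notion R) (T : Type) : Prop :=
  forall X : topologicalType, normal X -> ~ in_class alpha beta X ->
    card_le [set: T] [set: X].

Definition non_is (R : realType) (alpha beta : conv_notion R) (T : Type) : Prop :=
  (exists X : topologicalType,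
     [/\ normal X, ~ in_class alpha beta X & card_eq [set: X] [set: T]])
  /\ le_non alpha beta T.

Arguments Ip R I : clear implicits.
Arguments Iqn R I : clear implicits.
Arguments Isigmau R I : clear implicits.

(* Main.v *)
Require Import Defs.
From mathcomp Require Import all_boot all_order all_algebra.
From mathcomp Require Import all_classical all_reals all_analysis.
Import Order.TTheory GRing.Theory Num.Theory.
Local Open Scope classical_set_scope.
Local Open Scope ring_scope.

Lemma ideal_bounded (I : set (set nat)) (hI : is_ideal I) (P : nat -> set nat) :
  (forall i, I (P i)) -> forall j, I [set n | exists i, (i <= j)%N /\ P i n].
Proof.
case: hI => hU hS hF hT hP; elim=> [|j IH].
  apply: (hS _ _ _ (hP 0%N)) => n [i [+ Pi]]; by rewrite leqn0 => /eqP <-.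
apply: (hS _ _ _ (hU _ _ IH (hP j.+1))) => n [i [hi Pi]] /=.
move: hi; rewrite leq_eqVlt => /orP [/eqP <-|hi]; first by right.
by left; exists i.
Qed.

Lemma qn_p (R : realType) (I : set (set nat)) (hI : is_ideal I)
  (X : topologicalType) (f : nat -> X -> R) : Iqn R I X f -> Ip R I X f.
Proof.
case: hI => hU hS hF hT [eps [e0 ce hx]] x e he.
apply: (hS _ _ _ (hU _ _ (hx x) (ce e he))) => n /= hn.
case: (leP (eps n) `|f n x|) => h; first by left.
by right; rewrite ger0_norm ?(ltW (e0 n)) //; apply: (le_trans hn); apply: ltW.
Qed.

Lemma su_p (R : realType) (I : set (set nat)) (hI : is_ideal I)
  (X : topologicalType) (f : nat -> X -> R) : Isigmau R I X f -> Ip R I X f.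
Proof.
case: hI => hU hS hF hT [Xk [cov hu]] x e he.
have : (\bigcup_k Xk k) x by rewrite cov.
case=> k _ xk.
by apply: (hS _ _ _ (hu k e he)) => n /= hn; exists x.
Qed.

Lemma su_qn (R : realType) (I : set (set nat)) (hI : is_ideal I)
  (X : topologicalType) (f : nat -> X -> R) : Isigmau R I X f -> Iqn R I X f.
Proof.
move=> [Xk [cov hu]].
have hI' := hI; case: hI' => hU hS hF hT.
pose E j := [set n | exists i, (i <= j)%N /\
   exists2 x, Xk i x & ((j.+2)%:R)^-1 <= `|f n x| :> R].
have IE j : I (E j).
  apply: (@ideal_bounded I hI (fun i => [set n | exists2 x, Xk i x &
     ((j.+2)%:R)^-1 <= `|f n x| :> R]) _ j) => i.
  by apply: hu; rewrite invr_gt0 ltr0n.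
pose L n := find (fun i => `[< E i n >]) (iota 0 n).
have Ln n : (L n <= n)%N.
  by rewrite -[X in (_ <= X)%N](size_iota 0 n) find_size.
have LE n : (L n < n)%N -> E (L n) n.
  move=> h; have hs : has (fun i => `[< E i n >]) (iota 0 n).
    by rewrite has_find size_iota.
  by have := nth_find 0%N hs; rewrite -/(L n) nth_iota // add0n => /asboolP.
have LnE n j : (j < L n)%N -> ~ E j n.
  move=> hj; have := before_find 0%N hj; rewrite nth_iota; last first.
    exact: leq_trans hj (Ln n).
  by rewrite add0n => /negbT /asboolP.
exists (fun n => ((L n).+1%:R)^-1 : R); split.
- by move=> n; rewrite invr_gt0 ltr0n.
- move=> e he.
  set m := Num.trunc e^-1.
  have hm : ((m.+1)%:R)^-1 < e.
    rewrite invf_plt ?posrE ?ltr0n //; exact: truncnS_gt.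
  have hA := hU _ _ (hF _ (finite_II m.+1)) (ideal_bounded _ hI _ IE m).
  apply: (hS _ _ _ hA).
  move=> n /= hn.
  have hLm : (L n < m)%N.
    rewrite ltnNge; apply/negP => hle.
    move: hn; rewrite ger0_norm ?invr_ge0 ?ler0n // => hn.
    have : ((L n).+1%:R)^-1 <= ((m.+1)%:R)^-1 :> R.
      by rewrite lef_pV2 ?posrE ?ltr0n // ler_nat ltnS.
    move=> h; have := lt_le_trans hm (le_trans hn h); by rewrite ltxx.
  case: (ltnP n m.+1) => hnm; first by left.
  right; exists (L n); split; first exact: ltnW.
  by apply: LE; apply: (leq_trans hLm); apply: ltnW.
- move=> x.
  have : (\bigcup_k Xk k) x by rewrite cov.
  case=> k _ xk.
  apply: (hS _ _ _ (hU _ _ (hF _ (finite_II k.+1)) (ideal_bounded _ hI _ IE k))).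
  move=> n /= hn.
  case: (ltnP n k.+1) => hkn; first by left.
  case: (pselect (exists i, (i <= k)%N /\ E i n)) => [h|h]; first by right.
  exfalso.
  have hkL : (k < L n)%N.
    rewrite ltnNge; apply/negP => hL; apply: h; exists (L n); split => //.
    by apply: LE; apply: (leq_ltn_trans hL).
  have hj : ((L n).-1 < L n)%N by rewrite prednK ?(leq_ltn_trans _ hkL).
  apply: (LnE n _ hj); exists k; split; first by rewrite -ltnS prednK ?(leq_ltn_trans _ hkL).
  exists x => //.
  by rewrite prednK ?(leq_ltn_trans _ hkL).
Qed.

Lemma class_eq (R : realType) (I : set (set nat)) (hI : is_ideal I)
  (X : topologicalType) : normal X ->
     (in_class (Ip R I) (Isigmau R I) X <->
      in_class (Ip R I) (Iqn R I) X /\ in_class (Iqn R I) (Isigmau R I) X).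
Proof.
move=> nX; split.
- case=> _ h; split; split => // f cf; split.
  + by move=> p; apply: (su_qn _ _ hI); apply: (proj1 (h f cf)).
  + exact: (qn_p _ _ hI).
  + by move=> q; apply: (proj1 (h f cf)); apply: (qn_p _ _ hI).
  + exact: (su_qn _ _ hI).
- case=> [[_ h1] [_ h2]]; split => // f cf; split.
  + by move=> p; apply: (proj1 (h2 f cf)); apply: (proj1 (h1 f cf)).
  + exact: (su_p _ _ hI).
Qed.

Theorem corollary3p6 (R : realType) (I : set (set nat)) (hI : is_ideal I) :
  (* (1) *)
  (forall X : topologicalType, normal X ->
     (in_class (Ip R I) (Isigmau R I) X <->
      in_class (Ip R I) (Iqn R I) X /\ in_class (Iqn R I) (Isigmau R I) X))
  /\
  (* (2) non(p, sigma-u) = min{ non(p, qn), non(qn, sigma-u) } *)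
  ((non_infty (Ip R I) (Isigmau R I) <->
      non_infty (Ip R I) (Iqn R I) /\ non_infty (Iqn R I) (Isigmau R I))
   /\
   forall T : Type,
     non_is (Ip R I) (Isigmau R I) T <->
       (non_is (Ip R I) (Iqn R I) T /\ le_non (Iqn R I) (Isigmau R I) T) \/
       (non_is (Iqn R I) (Isigmau R I) T /\ le_non (Ip R I) (Iqn R I) T)).
Proof.
have CE := class_eq R _ hI.
have nC : forall X : topologicalType, normal X ->
   ~ in_class (Ip R I) (Isigmau R I) X <->
   ~ in_class (Ip R I) (Iqn R I) X \/ ~ in_class (Iqn R I) (Isigmau R I) X.
  move=> X nX; rewrite (CE X nX); split.
  - move=> h; case: (pselect (in_class (Ip R I) (Iqn R I) X)) => a; last by left.
    by right => b; apply: h.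
  - by case=> h [a b]; apply: h.
have LE : forall T, le_non (Ip R I) (Isigmau R I) T <->
   le_non (Ip R I) (Iqn R I) T /\ le_non (Iqn R I) (Isigmau R I) T.
  move=> T; split.
  - move=> h; split => X nX hX; apply: h => //; apply/(nC X nX); by [left|right].
  - by case=> h1 h2 X nX /(nC X nX) [] hX; [apply: h1|apply: h2].
split => //; split.
  split.
  - by move=> h; split => X nX; have /(CE X nX) [] := h X nX.
  - by case=> h1 h2 X nX; apply/(CE X nX); split; [apply: h1|apply: h2].
move=> T; split.
- case=> [[X [nX hX cX]] /LE [l1 l2]].
  case/(nC X nX): hX => hX.
  + by left; split => //; split => //; exists X.
  + by right; split => //; split => //; exists X.
- case=> [[[[X [nX hX cX]] l1] l2]|[[[X [nX hX cX]] l2] l1]];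
    (split; [exists X; split => //; apply/(nC X nX); by [left|right]
            | by apply/LE]).
Qed.
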